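(* Let $0<\theta_m<\theta_M$, $\Theta=(\theta_m,\theta_M)$, $\alpha>0$, $r>0$. For $\lambda>0$ let $(c(\lambda),Q(\cdot,\lambda))$ be the unique pair with $(-\lambda c(\lambda)+\theta\lambda^2+r)Q+\alpha\partial_{\theta\theta}Q=0$ on $\Theta$, $\partial_\theta Q(\theta_m,\lambda)=\partial_\theta Q(\theta_M,\lambda)=0$, $Q>0$, $\int_\Theta Q\,d\theta=1$, and let $c^*=\min_{\lambda>0}c(\lambda)$. Define $H:\mathbb{R}\to\mathbb{R}$ by $H(\lambda)=|\lambda|c(|\lambda|)$ for $\lambda\neq0$ and $H(0)=r$. Then: for all $\lambda\in\mathbb{R}$ there exists a unique solution $(H(\lambda),Q(\cdot,\lambda))$ of $$(-H(\lambda)+\theta\lambda^2+r)Q+\alpha\partial_{\theta\theta}Q=0\text{ on }\Theta,\quad \partial_\theta Q(\theta_m,\lambda)=\partial_\theta Q(\theta_M,\lambda)=0,\quad Q>0,\quad\int_\Theta Q\,d\theta=1;$$ the map $\lambda\mapsto H(\lambda)$ is continuous and convex on $\mathbb{R}$ and satisfies $\lambda^2\theta_m+r\le H(\lambda)\le\lambda^2\theta_M+r$ for all $\lambda$; for all $\lambda\in\mathbb{R}$, $\inf_{s>0}\{sH(\lambda/s)\}=|\lambda|c^*$; and $2\sqrt{\theta_mr}\le c^*\le2\sqrt{\theta_Mr}$.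
   Context: It is known (and taken as given) that for every $\lambda>0$ the pair $(c(\lambda),Q(\cdot,\lambda))$ described exists and is unique, that $\lambda\mapsto c(\lambda)$ is continuous on $(0,\infty)$ with $\lambda^2\theta_m+r\le\lambda c(\lambda)\le\lambda^2\theta_M+r$, and that $c$ attains its minimum $c^*$ at some $\lambda^*>0$. *)

(* Defs.v *)
From Stdlib Require Import Reals.
From Coquelicot Require Import Coquelicot.
Open Scope R_scope.

Definition eigpb (alpha r thm thM l h : R) (Q : R -> R) : Prop :=
  (forall th, thm <= th <= thM -> ex_derive Q th /\ ex_derive (Derive Q) th) /\
  (forall th, thm < th < thM ->
      (- h + th * l ^ 2 + r) * Q th + alpha * Derive_n Q 2 th = 0) /\
  Derive Q thm = 0 /\ Derive Q thM = 0 /\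
  (forall th, thm < th < thM -> 0 < Q th) /\
  is_RInt Q thm thM 1.

Definition Hfun (c : R -> R) (r l : R) : R :=
  if Req_EM_T l 0 then r else Rabs l * c (Rabs l).

(* Main.v *)
Require Import Defs.
From Stdlib Require Import Reals Lra Psatz FunctionalExtensionality.
From Coquelicot Require Import Coquelicot.
Open Scope R_scope.

Lemma cont_of_ex f x : ex_derive f x -> continuity_pt f x.
Proof. intros H. apply continuity_pt_filterlim. apply (ex_derive_continuous (K:=R_AbsRing) (V:=R_NormedModule)). exact H. Qed.

Lemma mvt_open f df a b : a < b ->
  (forall x, a <= x <= b -> continuity_pt f x) ->
  (forall x, a < x < b -> is_derive f x (df x)) ->
  exists c, a < c < b /\ f b - f a = df c * (b - a).
Proof.
  intros Hab Hc Hd.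
  assert (pr : forall x, a < x < b -> derivable_pt f x).
  { intros x Hx. apply ex_derive_Reals_0. eexists. now apply Hd. }
  assert (pr2 : forall x, a < x < b -> derivable_pt (fun y => y) x).
  { intros x Hx. apply derivable_pt_id. }
  destruct (MVT f (fun y => y) a b pr pr2 Hab Hc) as [c [P HP]].
  { intros; apply derivable_continuous_pt, derivable_pt_id. }
  exists c; split; auto.
  rewrite Derive_Reals in HP. rewrite Derive_Reals in HP.
  rewrite (is_derive_unique _ _ _ (Hd c P)) in HP.
  assert (Derive (fun y => y) c = 1) by (apply is_derive_unique; auto_derive; auto).
  rewrite H in HP. lra.
Qed.

Lemma rolle_open f df a b : a < b ->
  (forall x, a <= x <= b -> is_derive f x (df x)) -> f a = f b ->
  exists c, a < c < b /\ df c = 0.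
Proof.
  intros Hab Hd He.
  destruct (mvt_open f df a b Hab) as [c [Hc1 Hc2]].
  { intros x Hx. apply cont_of_ex. eexists. now apply Hd. }
  { intros x Hx. apply Hd. lra. }
  exists c; split; auto. rewrite He in Hc2.
  assert (df c * (b - a) = 0) by lra.
  destruct (Rmult_integral _ _ H); auto; lra.
Qed.

Lemma const_closed f a b : a < b ->
  (forall x, a <= x <= b -> continuity_pt f x) ->
  (forall x, a < x < b -> is_derive f x 0) ->
  forall x, a <= x <= b -> f x = f a.
Proof.
  intros Hab Hc Hd x Hx.
  destruct (Req_dec x a) as [->|Hne]; auto.
  destruct (mvt_open f (fun _ => 0) a x) as [c [Hc1 Hc2]]; try lra.
  { intros y Hy; apply Hc; lra. }
  { intros y Hy; apply Hd; lra. }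
Qed.

Lemma alg1 p d k M s : Rabs (s*(1+k)) <= M -> 0 <= s*(2*p*d*(1+k)) + M*(p^2+d^2).
Proof.
  intros H. pose proof (pow2_ge_0 (p-d)). pose proof (pow2_ge_0 (p+d)).
  revert H. unfold Rabs; destruct (Rcase_abs _); intros; nra.
Qed.

Lemma dF_der (P : R -> R) s M x : ex_derive P x -> ex_derive (Derive P) x ->
 is_derive (fun x => (P x ^2 + Derive P x ^2) * exp (s*M*x)) x
  ((2 * P x * Derive P x + 2 * Derive P x * Derive (Derive P) x) * exp (s*M*x) + (P x ^2 + Derive P x ^2) * (s*M) * exp (s*M*x)).
Proof.
intros. auto_derive. auto. change (fun x0 : R => P x0) with P. change (fun x0 : R => Derive P x0) with (Derive P). ring.
Qed.

Section Pos.
Variables (alpha r a b l h : R) (P : R -> R).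
Hypotheses (Hr : 0 < r) (Ha : 0 < a) (Hab : a < b) (Hal : 0 < alpha)
  (HP : eigpb alpha r a b l h P).

Let M := 1 + (Rabs h + b * l^2 + r) / alpha.

Lemma Kbound x s : a < x < b -> (s = 1 \/ s = -1) ->
  Rabs (s * (1 + (h - x*l^2 - r)/alpha)) <= M.
Proof.
  intros Hx Hs. unfold M. rewrite Rabs_mult.
  assert (Rabs s = 1) by (destruct Hs as [->| ->]; unfold Rabs; destruct Rcase_abs; lra).
  rewrite H, Rmult_1_l.
  eapply Rle_trans. apply Rabs_triang. rewrite Rabs_R1. apply Rplus_le_compat_l.
  unfold Rdiv. rewrite Rabs_mult, (Rabs_inv alpha), (Rabs_right alpha) by lra.
  apply Rmult_le_compat_r. left; apply Rinv_0_lt_compat; lra.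
  eapply Rle_trans. apply Rabs_triang. rewrite Rabs_Ropp, (Rabs_right r) by lra.
  apply Rplus_le_compat_r. eapply Rle_trans. apply Rabs_triang.
  rewrite Rabs_Ropp. apply Rplus_le_compat_l.
  rewrite Rabs_mult, (Rabs_right x) by lra. rewrite (Rabs_right (l^2)) by (apply Rle_ge; nra).
  apply Rmult_le_compat_r; [nra|lra].
Qed.

Lemma dF_sign x s : a < x < b -> (s = 1 \/ s = -1) ->
  0 <= s * ((2 * P x * Derive P x + 2 * Derive P x * Derive (Derive P) x) * exp (s*M*x) + (P x ^2 + Derive P x ^2) * (s*M) * exp (s*M*x)).
Proof.
  intros Hx Hs. destruct HP as [Hd [He _]].
  pose proof (He x Hx) as E.
  change (Derive_n P 2 x) with (Derive (Derive P) x) in E.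
  set (k := (h - x*l^2 - r)/alpha).
  assert (Derive (Derive P) x = k * P x).
  { assert (E2 : alpha * Derive (Derive P) x = (h - x*l^2 - r) * P x) by lra.
    apply (Rmult_eq_reg_l alpha); [rewrite E2; unfold k; field; lra | lra]. }
  rewrite H.
  pose proof (alg1 (P x) (Derive P x) k M s (Kbound x s Hx Hs)).
  assert (0 < exp (s*M*x)) by apply exp_pos.
  assert (s*s = 1) by (destruct Hs as [-> | ->]; ring).
  replace (s * ((2 * P x * Derive P x + 2 * Derive P x * (k * P x)) * exp (s * M * x) +
   (P x ^ 2 + Derive P x ^ 2) * (s * M) * exp (s * M * x))) with
   ((s * (2 * P x * Derive P x * (1 + k)) + (s*s) * M * (P x ^ 2 + Derive P x ^ 2)) * exp (s*M*x)) by ring.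
  rewrite H2. nra.
Qed.

Lemma P_cont x : a <= x <= b -> continuity_pt P x.
Proof. intros. apply cont_of_ex. apply (proj1 HP x H). Qed.

Lemma endpoint_nz : P a <> 0 /\ P b <> 0.
Proof.
  pose (m := (a+b)/2).
  assert (Hm : a < m < b) by (unfold m; lra).
  destruct HP as [Hd [He [Hda [Hdb [Hpos _]]]]].
  pose (F s x := (P x ^2 + Derive P x ^2) * exp (s*M*x)).
  pose (dF s x := (2 * P x * Derive P x + 2 * Derive P x * Derive (Derive P) x) * exp (s*M*x) + (P x ^2 + Derive P x ^2) * (s*M) * exp (s*M*x)).
  assert (HFm : forall s, 0 < F s m).
  { intros s. unfold F. apply Rmult_lt_0_compat; [|apply exp_pos].
    pose proof (Hpos m Hm). nra. }
  split; intros H0.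
  - destruct (mvt_open (F (-1)) (dF (-1)) a m) as [c [Hc1 Hc2]]; [lra| | |].
    + intros x Hx. apply cont_of_ex. eexists. apply dF_der; apply Hd; lra.
    + intros x Hx. apply dF_der; apply Hd; lra.
    + pose proof (dF_sign c (-1) ltac:(lra) ltac:(right; reflexivity)).
      assert (F (-1) a = 0) by (unfold F; rewrite H0, Hda; ring).
      pose proof (HFm (-1)). fold (dF (-1) c) in H. nra.
  - destruct (mvt_open (F 1) (dF 1) m b) as [c [Hc1 Hc2]]; [lra| | |].
    + intros x Hx. apply cont_of_ex. eexists. apply dF_der; apply Hd; lra.
    + intros x Hx. apply dF_der; apply Hd; lra.
    + pose proof (dF_sign c 1 ltac:(lra) ltac:(left; reflexivity)).
      assert (F 1 b = 0) by (unfold F; rewrite H0, Hdb; ring).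
      pose proof (HFm 1). fold (dF 1 c) in H. nra.
Qed.
End Pos.

Lemma cont_nonneg_end f a b y : a < b -> (y = a \/ y = b) -> continuity_pt f y ->
  (forall x, a < x < b -> 0 < f x) -> 0 <= f y.
Proof.
  intros Hab Hy Hc Hp. destruct (Rle_lt_dec 0 (f y)) as [|Hn]; auto. exfalso.
  destruct (Hc (- f y) ltac:(lra)) as [alp [Halp Hd]].
  set (e := Rmin alp (b - a) / 2).
  assert (0 < e) by (unfold e, Rmin; destruct Rle_dec; lra).
  assert (e < alp /\ e < b - a) by (unfold e; unfold Rmin; destruct Rle_dec; lra).
  destruct Hy as [-> | ->].
  - assert (Hx : a < a + e < b) by lra.
    specialize (Hd (a+e)). simpl in Hd. unfold R_dist, D_x, no_cond in Hd.
    rewrite Rabs_right in Hd by lra.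
    assert (Rabs (f (a+e) - f a) < - f a) by (apply Hd; split; [split; [auto|lra]|lra]).
    pose proof (Hp _ Hx). revert H1; unfold Rabs; destruct Rcase_abs; lra.
  - assert (Hx : a < b - e < b) by lra.
    specialize (Hd (b-e)). simpl in Hd. unfold R_dist, D_x, no_cond in Hd.
    rewrite Rabs_left in Hd by lra.
    assert (Rabs (f (b-e) - f b) < - f b) by (apply Hd; split; [split; [auto|lra]|lra]).
    pose proof (Hp _ Hx). revert H1; unfold Rabs; destruct Rcase_abs; lra.
Qed.

Lemma eig_pos alpha r a b l h P : 0 < r -> 0 < a -> a < b -> 0 < alpha ->
  eigpb alpha r a b l h P -> forall x, a <= x <= b -> 0 < P x.
Proof.
  intros Hr Ha Hab Hal HP x Hx.
  destruct (endpoint_nz alpha r a b l h P Hr Ha Hab Hal HP) as [Na Nb].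
  pose proof HP as [_ [_ [_ [_ [Hpos _]]]]].
  destruct (Req_dec x a) as [->|]. 
  { pose proof (cont_nonneg_end P a b a Hab (or_introl eq_refl) (P_cont alpha r a b l h P HP a ltac:(lra)) Hpos). lra. }
  destruct (Req_dec x b) as [->|].
  { pose proof (cont_nonneg_end P a b b Hab (or_intror eq_refl) (P_cont alpha r a b l h P HP b ltac:(lra)) Hpos). lra. }
  apply Hpos; lra.
Qed.

Lemma alg2 q1 q2 p d1 d2 dp s1 s2 sp alpha t xi L L1 L2 h h1 h2 r :
  0 < q1 -> 0 < q2 -> 0 < p -> 0 < alpha -> 0 <= t <= 1 -> 0 < xi ->
  L <= t * L1 + (1-t) * L2 ->
  alpha * s1 = (h1 - xi * L1 - r) * q1 ->
  alpha * s2 = (h2 - xi * L2 - r) * q2 ->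
  alpha * sp = (h - xi * L - r) * p ->
  t*((s1*q1 - d1^2)/q1^2) + (1-t)*((s2*q2-d2^2)/q2^2) - ((sp*p - dp^2)/p^2)
   + (t*(d1/q1)+(1-t)*(d2/q2) - dp/p)*(t*(d1/q1)+(1-t)*(d2/q2)+dp/p) = 0 ->
  h <= t * h1 + (1-t) * h2.
Proof.
  intros Hq1 Hq2 Hp Ha Ht Hxi HL E1 E2 E3 Z.
  assert (s1 = (h1 - xi * L1 - r) / alpha * q1) by (apply (Rmult_eq_reg_l alpha); [rewrite E1; field | ]; lra).
  assert (s2 = (h2 - xi * L2 - r) / alpha * q2) by (apply (Rmult_eq_reg_l alpha); [rewrite E2; field | ]; lra).
  assert (sp = (h - xi * L - r) / alpha * p) by (apply (Rmult_eq_reg_l alpha); [rewrite E3; field | ]; lra).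
  subst s1 s2 sp.
  set (a1 := d1/q1) in *. set (a2 := d2/q2) in *.
  replace (t*((((h1 - xi * L1 - r) / alpha * q1)*q1 - d1^2)/q1^2) + (1-t)*((((h2 - xi * L2 - r) / alpha * q2)*q2-d2^2)/q2^2) - ((((h - xi * L - r) / alpha * p)*p - dp^2)/p^2)
   + (t*a1+(1-t)*a2 - dp/p)*(t*a1+(1-t)*a2+dp/p))
  with ((t*(h1 - xi * L1 - r) + (1-t)*(h2 - xi*L2 - r) - (h - xi*L - r))/alpha - t*(1-t)*(a1-a2)^2) in Z
  by (unfold a1, a2; field; lra).
  assert (Hg : 0 <= t*(1-t)*(a1-a2)^2) by (apply Rmult_le_pos; [nra | apply pow2_ge_0]).
  assert (Hk : 0 <= (t*(h1 - xi * L1 - r) + (1-t)*(h2 - xi*L2 - r) - (h - xi*L - r))/alpha) by lra.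
  assert (0 <= t*(h1 - xi * L1 - r) + (1-t)*(h2 - xi*L2 - r) - (h - xi*L - r)).
  { apply (Rmult_le_reg_r (/alpha)). apply Rinv_0_lt_compat; lra. rewrite Rmult_0_l. exact Hk. }
  nra.
Qed.
Definition Dfun (t : R) (Q1 Q2 P : R -> R) x :=
  (t*(Derive Q1 x/Q1 x) + (1-t)*(Derive Q2 x/Q2 x) - Derive P x / P x) *
  exp (t*ln (Q1 x) + (1-t)*ln (Q2 x) + ln (P x)).
Definition dDfun (t : R) (Q1 Q2 P : R -> R) x :=
  exp (t*ln (Q1 x) + (1-t)*ln (Q2 x) + ln (P x)) *
  (t*((Derive (Derive Q1) x*Q1 x - Derive Q1 x^2)/Q1 x^2) + (1-t)*((Derive (Derive Q2) x*Q2 x-Derive Q2 x^2)/Q2 x^2) - ((Derive (Derive P) x*P x - Derive P x^2)/P x^2)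
   + (t*(Derive Q1 x/Q1 x)+(1-t)*(Derive Q2 x/Q2 x) - Derive P x/P x)*(t*(Derive Q1 x/Q1 x)+(1-t)*(Derive Q2 x/Q2 x)+Derive P x/P x)).
Lemma Dder t Q1 Q2 P x : ex_derive Q1 x -> ex_derive Q2 x -> ex_derive P x ->
  ex_derive (Derive Q1) x -> ex_derive (Derive Q2) x -> ex_derive (Derive P) x ->
  0 < Q1 x -> 0 < Q2 x -> 0 < P x -> is_derive (Dfun t Q1 Q2 P) x (dDfun t Q1 Q2 P x).
Proof.
  intros. unfold Dfun, dDfun. auto_derive.
  - repeat split; auto; lra.
  - change (fun x0 : R => Q1 x0) with Q1. change (fun x0 : R => Q2 x0) with Q2.
    change (fun x0 : R => P x0) with P.
    change (fun x0 : R => Derive Q1 x0) with (Derive Q1).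
    change (fun x0 : R => Derive Q2 x0) with (Derive Q2).
    change (fun x0 : R => Derive P x0) with (Derive P).
    field. repeat split; lra.
Qed.

Lemma cmp alpha r a b l h P l1 h1 Q1 l2 h2 Q2 t :
  0 < r -> 0 < a -> a < b -> 0 < alpha ->
  eigpb alpha r a b l h P -> eigpb alpha r a b l1 h1 Q1 -> eigpb alpha r a b l2 h2 Q2 ->
  0 <= t <= 1 -> l^2 <= t * l1^2 + (1-t) * l2^2 ->
  h <= t * h1 + (1-t) * h2.
Proof.
  intros Hr Ha Hab Hal HP HQ1 HQ2 Ht HL.
  pose proof (eig_pos _ _ _ _ _ _ _ Hr Ha Hab Hal HP) as pP.
  pose proof (eig_pos _ _ _ _ _ _ _ Hr Ha Hab Hal HQ1) as pQ1.
  pose proof (eig_pos _ _ _ _ _ _ _ Hr Ha Hab Hal HQ2) as pQ2.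
  destruct HP as [dP [eP [P0 [P1 _]]]].
  destruct HQ1 as [dQ1 [eQ1 [Q10 [Q11 _]]]].
  destruct HQ2 as [dQ2 [eQ2 [Q20 [Q21 _]]]].
  destruct (rolle_open (Dfun t Q1 Q2 P) (dDfun t Q1 Q2 P) a b Hab) as [xi [Hxi Z]].
  { intros x Hx. destruct (dP x Hx), (dQ1 x Hx), (dQ2 x Hx).
    apply Dder; auto. }
  { unfold Dfun. rewrite P0, P1, Q10, Q11, Q20, Q21. unfold Rdiv. rewrite !Rmult_0_l, !Rmult_0_r, !Rplus_0_r, Rminus_0_r, !Rmult_0_l. reflexivity. }
  unfold dDfun in Z.
  apply Rmult_integral in Z. destruct Z as [Z|Z].
  { pose proof (exp_pos (t * ln (Q1 xi) + (1 - t) * ln (Q2 xi) + ln (P xi))). lra. }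
  assert (xi0 : a <= xi <= b) by lra.
  specialize (eP xi Hxi). specialize (eQ1 xi Hxi). specialize (eQ2 xi Hxi).
  change (Derive_n P 2 xi) with (Derive (Derive P) xi) in eP.
  change (Derive_n Q1 2 xi) with (Derive (Derive Q1) xi) in eQ1.
  change (Derive_n Q2 2 xi) with (Derive (Derive Q2) xi) in eQ2.
  eapply (alg2 (Q1 xi) (Q2 xi) (P xi) _ _ _ _ _ _ alpha t xi (l^2) (l1^2) (l2^2) h h1 h2 r); eauto; try lra.
Qed.

Lemma eigpb_sq alpha r a b l1 l2 h Q : l1^2 = l2^2 ->
  eigpb alpha r a b l1 h Q -> eigpb alpha r a b l2 h Q.
Proof.
  intros E [H1 [H2 H3]]. split; [auto|split; [|auto]].
  intros th Hth. rewrite <- E. auto.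
Qed.

Lemma Derive_cst k : Derive (fun _ : R => k) = fun _ => 0.
Proof. apply functional_extensionality; intros; apply Derive_const. Qed.

Lemma const_sol alpha r a b l : a < b -> l = 0 ->
  eigpb alpha r a b l r (fun _ => / (b - a)).
Proof.
  intros Hab ->. unfold eigpb. rewrite Derive_cst.
  split; [|split; [|split; [|split; [|split]]]].
  - intros; split; apply ex_derive_const.
  - intros th _. simpl. rewrite Derive_cst. rewrite Derive_const. ring.
  - reflexivity.
  - reflexivity.
  - intros; apply Rinv_0_lt_compat; lra.
  - assert (E : (b-a) * /(b-a) = 1) by (field; lra). rewrite <- E.
    apply (is_RInt_const a b (/(b-a))).
Qed.

Lemma unique0 alpha r a b h Q : 0 < r -> 0 < a -> a < b -> 0 < alpha ->
  eigpb alpha r a b 0 h Q ->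
  h = r /\ forall th, a <= th <= b -> Q th = / (b - a).
Proof.
  intros Hr Ha Hab Hal HQ.
  pose proof (const_sol alpha r a b 0 Hab eq_refl) as HC.
  assert (h <= 1 * r + (1-1) * r) by (apply (cmp alpha r a b 0 h Q 0 r (fun _ => /(b-a)) 0 r (fun _ => /(b-a)) 1); auto; lra).
  assert (r <= 1 * h + (1-1) * h) by (apply (cmp alpha r a b 0 r (fun _ => /(b-a)) 0 h Q 0 h Q 1); auto; lra).
  assert (Hh : h = r) by lra. split; auto. subst h.
  destruct HQ as [Hd [He [Z0 [Z1 [Hp Hi]]]]].
  assert (DD : forall x, a <= x <= b -> Derive Q x = Derive Q a).
  { apply const_closed; auto.
    - intros x Hx. apply cont_of_ex. apply (Hd x Hx).
    - intros x Hx. assert (Hx' : a <= x <= b) by lra.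
      pose proof (Derive_correct _ _ (proj2 (Hd x Hx'))) as D.
      specialize (He x Hx). change (Derive_n Q 2 x) with (Derive (Derive Q) x) in He.
      replace (Derive (Derive Q) x) with 0 in D; auto.
      apply (Rmult_eq_reg_l alpha); [|lra]. ring_simplify. ring_simplify in He. lra. }
  assert (DQ : forall x, a <= x <= b -> Q x = Q a).
  { apply const_closed; auto.
    - intros x Hx. apply cont_of_ex. apply (Hd x Hx).
    - intros x Hx. assert (Hx' : a <= x <= b) by lra.
      pose proof (Derive_correct _ _ (proj1 (Hd x Hx'))) as D.
      rewrite DD, Z0 in D; auto. }
  assert (Hi' : is_RInt (fun _ => Q a) a b 1).
  { apply (is_RInt_ext Q); auto. intros x Hx. rewrite Rmin_left, Rmax_right in Hx by lra.
    apply DQ; lra. }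
  pose proof (is_RInt_unique _ _ _ _ Hi') as U1.
  pose proof (is_RInt_unique _ _ _ _ (is_RInt_const a b (Q a))) as U2.
  rewrite U1 in U2. change (scal (b-a) (Q a)) with ((b-a) * Q a) in U2.
  intros th Hth. rewrite DQ by auto. apply (Rmult_eq_reg_l (b-a)); [|lra].
  rewrite <- U2. field. lra.
Qed.

Theorem proposition1p12
  (thm thM alpha r : R) (c : R -> R) (ls : R)
  (Hthm : 0 < thm) (HthmM : thm < thM) (Halpha : 0 < alpha) (Hr : 0 < r)
  (Hc : forall l, 0 < l ->
     exists Q0, eigpb alpha r thm thM l (l * c l) Q0 /\
       forall cc Q, eigpb alpha r thm thM l (l * cc) Q ->
         cc = c l /\ (forall th, thm <= th <= thM -> Q th = Q0 th))
  (Hccont : forall l, 0 < l -> continuous c l)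
  (Hcbnd : forall l, 0 < l ->
     l ^ 2 * thm + r <= l * c l <= l ^ 2 * thM + r)
  (Hls : 0 < ls) (Hmin : forall l, 0 < l -> c ls <= c l) :
  let H := Hfun c r in
  let cstar := c ls in
  (forall l, exists Q0, eigpb alpha r thm thM l (H l) Q0 /\
     forall h Q, eigpb alpha r thm thM l h Q ->
       h = H l /\ (forall th, thm <= th <= thM -> Q th = Q0 th)) /\
  (forall l, continuous H l) /\
  (forall x y t, 0 <= t <= 1 ->
     H (t * x + (1 - t) * y) <= t * H x + (1 - t) * H y) /\
  (forall l, l ^ 2 * thm + r <= H l <= l ^ 2 * thM + r) /\
  (forall l, is_glb_Rbar (fun v => exists s, 0 < s /\ v = s * H (l / s))
                         (Finite (Rabs l * cstar))) /\
  2 * sqrt (thm * r) <= cstar <= 2 * sqrt (thM * r).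
Proof.
  intros H cstar.
  assert (H0 : H 0 = r) by (unfold H, Hfun; destruct Req_EM_T; [auto|lra]).
  assert (Hnz : forall l, l <> 0 -> H l = Rabs l * c (Rabs l))
    by (intros l Hl; unfold H, Hfun; destruct Req_EM_T; [lra|auto]).
  assert (P1 : forall l, exists Q0, eigpb alpha r thm thM l (H l) Q0 /\
     forall h Q, eigpb alpha r thm thM l h Q ->
       h = H l /\ (forall th, thm <= th <= thM -> Q th = Q0 th)).
  { intros l. destruct (Req_dec l 0) as [->|Hl].
    - exists (fun _ => /(thM - thm)). rewrite H0. split.
      + apply const_sol; auto.
      + intros h Q HQ. apply (unique0 alpha r thm thM h Q); auto.
    - rewrite (Hnz l Hl). assert (Hal : 0 < Rabs l) by (apply Rabs_pos_lt; auto).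
      destruct (Hc (Rabs l) Hal) as [Q0 [HQ0 U]]. exists Q0. split.
      + eapply eigpb_sq; [|exact HQ0]. apply pow2_abs.
      + intros h Q HQ. apply (eigpb_sq _ _ _ _ l (Rabs l)) in HQ; [|rewrite pow2_abs; auto].
        replace h with (Rabs l * (h / Rabs l)) in HQ by (field; lra).
        destruct (U _ _ HQ) as [E1 E2]. split; auto.
        rewrite <- E1. field. lra. }
  assert (P4 : forall l, l ^ 2 * thm + r <= H l <= l ^ 2 * thM + r).
  { intros l. destruct (Req_dec l 0) as [->|Hl].
    - rewrite H0. simpl. nra.
    - rewrite (Hnz l Hl). rewrite <- pow2_abs. apply Hcbnd. apply Rabs_pos_lt; auto. }
  split; [exact P1|]. split; [|split; [|split; [exact P4|split]]].
  -
    intros l. destruct (Req_dec l 0) as [->|Hl].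
    + apply continuity_pt_filterlim. intros eps Heps.
      exists (Rmin 1 (eps / thM)). split.
      { apply Rmin_glb_lt; [lra|]. apply Rdiv_lt_0_compat; lra. }
      assert (AUX : forall x : R, Rabs x < Rmin 1 (eps / thM) -> Rabs (H x - r) < eps).
      { intros x Hx.
        pose proof (Rmin_l 1 (eps/thM)) as M1. pose proof (Rmin_r 1 (eps/thM)) as M2.
        assert (Hx1 : Rabs x < 1) by lra. assert (Hx2 : Rabs x * thM < eps).
        { apply (Rmult_lt_reg_r (/thM)). apply Rinv_0_lt_compat; lra.
          replace (Rabs x * thM * / thM) with (Rabs x) by (field; lra). unfold Rdiv in *. lra. }
        pose proof (P4 x) as B. rewrite <- pow2_abs in B.
        pose proof (Rabs_pos x) as B2.
        assert (B3 : Rabs x ^ 2 * thM <= Rabs x * thM).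
        { replace (Rabs x ^ 2) with (Rabs x * Rabs x) by ring. apply Rmult_le_compat_r; [lra|]. rewrite <- (Rmult_1_r (Rabs x)) at 3. apply Rmult_le_compat_l; lra. }
        assert (B4 : 0 <= Rabs x ^ 2 * thm) by (apply Rmult_le_pos; [apply pow2_ge_0|lra]).
        unfold Rabs at 1. destruct Rcase_abs; lra. }
      intros x [_ Hx]. simpl in Hx |- *. unfold R_dist in Hx. rewrite Rminus_0_r in Hx.
      unfold Rdist. rewrite H0. apply AUX. exact Hx.
    + apply (continuous_ext_loc _ (fun y => Rabs y * c (Rabs y))).
      * assert (Hal : 0 < Rabs l) by (apply Rabs_pos_lt; auto).
        exists (mkposreal _ Hal). intros y Hy. simpl in Hy.
        unfold ball in Hy; simpl in Hy. unfold AbsRing_ball, abs, minus, plus, opp in Hy; simpl in Hy.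
        rewrite Hnz; auto. intros ->. rewrite Rplus_0_l, Rabs_Ropp in Hy. lra.
      * apply (continuous_mult (fun y => Rabs y) (fun y => c (Rabs y))).
        apply continuous_Rabs.
        apply (continuous_comp Rabs c). apply continuous_Rabs.
        apply Hccont. apply Rabs_pos_lt; auto.
  -
    intros x y t Ht.
    destruct (P1 x) as [Qx [Ex _]]. destruct (P1 y) as [Qy [Ey _]].
    destruct (P1 (t*x+(1-t)*y)) as [Qz [Ez _]].
    apply (cmp alpha r thm thM (t*x+(1-t)*y) _ Qz x _ Qx y _ Qy t); auto; try lra.
    assert (0 <= t*(1-t)*(x-y)^2) by (apply Rmult_le_pos; [nra|apply pow2_ge_0]).
    nra.
  -
    intros l. destruct (Req_dec l 0) as [->|Hl].
    + rewrite Rabs_R0, Rmult_0_l. split.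
      * intros v [s [Hs ->]]. simpl. unfold Rdiv. rewrite Rmult_0_l, H0. nra.
      * intros bb Hb. destruct bb as [b0| |]; simpl; auto.
        -- apply Rnot_lt_le. intros Hb0.
           specialize (Hb (b0 / (2*r) * H (0 / (b0/(2*r))))). simpl in Hb.
           assert (0 / (b0 / (2*r)) = 0) by (unfold Rdiv; ring). rewrite H1, H0 in Hb.
           assert (b0 <= b0 / (2 * r) * r) by (apply Hb; exists (b0/(2*r)); split;
             [apply Rdiv_lt_0_compat; lra | rewrite H1, H0; reflexivity]).
           replace (b0 / (2*r) * r) with (b0/2) in H2 by (field; lra). lra.
        -- apply (Hb (1 * H (0/1))). exists 1; split; auto; lra.
    + assert (Hal : 0 < Rabs l) by (apply Rabs_pos_lt; auto). split.
      * intros v [s [Hs ->]]. simpl.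
        assert (l / s <> 0) by (unfold Rdiv; apply Rmult_integral_contrapositive; split; auto;
          apply Rinv_neq_0_compat; lra).
        rewrite Hnz by auto. rewrite Rabs_div by lra. rewrite (Rabs_right s) by lra.
        replace (s * (Rabs l / s * c (Rabs l / s))) with (Rabs l * c (Rabs l / s)) by (field; lra).
        apply Rmult_le_compat_l; [lra|]. apply Hmin. apply Rdiv_lt_0_compat; lra.
      * intros bb Hb. set (s := Rabs l / ls).
        assert (Hs : 0 < s) by (apply Rdiv_lt_0_compat; lra).
        assert (E : s * H (l / s) = Rabs l * cstar).
        { assert (l / s <> 0) by (unfold Rdiv; apply Rmult_integral_contrapositive; split; auto;
            apply Rinv_neq_0_compat; lra).
          rewrite Hnz by auto. rewrite Rabs_div by lra. rewrite (Rabs_right s) by lra.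
          unfold s. replace (Rabs l / (Rabs l / ls)) with ls by (field; lra).
          unfold cstar. field. lra. }
        rewrite <- E. apply Hb. exists s; split; auto.
  -
    unfold cstar. rewrite !sqrt_mult by lra.
    assert (A1 := sqrt_lt_R0 thm Hthm). assert (A2 := sqrt_lt_R0 thM ltac:(lra)).
    assert (A3 := sqrt_lt_R0 r Hr).
    assert (S1 := sqrt_sqrt thm ltac:(lra)). assert (S2 := sqrt_sqrt thM ltac:(lra)).
    assert (S3 := sqrt_sqrt r ltac:(lra)).
    split.
    + pose proof (Hcbnd ls Hls).
      assert (0 <= (ls * sqrt thm - sqrt r)^2) by apply pow2_ge_0.
      assert (2 * (sqrt thm * sqrt r) * ls <= c ls * ls) by nra. nra.
    + set (l0 := sqrt r / sqrt thM).
      assert (Hl0 : 0 < l0) by (apply Rdiv_lt_0_compat; lra).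
      pose proof (Hcbnd l0 Hl0). pose proof (Hmin l0 Hl0).
      assert (l0 ^ 2 * thM = r).
      { assert (E : l0^2 * thM = (sqrt r * sqrt r) * (thM / (sqrt thM * sqrt thM))) by (unfold l0; field; lra).
        rewrite E, S2, S3. field; lra. }
      assert (c l0 * l0 <= 2 * (sqrt thM * sqrt r) * l0).
      { unfold l0 at 3. replace (2 * (sqrt thM * sqrt r) * (sqrt r / sqrt thM)) with (2 * (sqrt r * sqrt r)) by (field; lra). nra. }
      assert (c l0 <= 2 * (sqrt thM * sqrt r)) by nra. lra.
Qed.
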